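(* For any integers $k\ge 2$, $g\ge 3$ and any $\epsilon>0$, there exists a signed graph $(G,\sigma)$ of girth at least $g$ such that $\chi(G)=k$ and $\chi_c(G,\sigma)>2k-\epsilon$.
   Context: A signed graph $(G,\sigma)$ is a finite graph $G$ (multiple edges allowed, no loops) with a signature $\sigma:E(G)\to\{+1,-1\}$. $\chi(G)$ is the chromatic number of the underlying graph $G$. For real $r\ge 2$, $C^r$ is the circle of circumference $r$, $d_{C^r}(x,y)=\min\{|x-y|,r-|x-y|\}$, and $\overline{x}=x+r/2\pmod r$. A circular $r$-coloring of $(G,\sigma)$ is $f:V(G)\to C^r$ with $d_{C^r}(f(u),f(v))\ge1$ for each positive edge $uv$ and $d_{C^r}(f(u),\overline{f(v)})\ge1$ for each negative edge $uv$; $\chi_c(G,\sigma)$ is the infimum of $r\ge 2$ for which such a coloring exists. *)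

(* Defs.v *)
From HB Require Import structures.
From mathcomp Require Import all_boot all_order all_algebra.
From mathcomp Require Import boolp classical_sets reals.
Set Implicit Arguments. Unset Strict Implicit. Unset Printing Implicit Defensive.
Import Order.TTheory GRing.Theory Num.Theory.
Local Open Scope ring_scope.

(* A signature is a symmetric relation [sigma];
   the edge uv is negative iff [sigma u v] (its value on non-edges is
   irrelevant). *)
Definition simple_graph (T : finType) (e : rel T) :=
  symmetric e /\ irreflexive e.

Definition is_cycle (T : finType) (e : rel T) (s : seq T) :=
  (3 <= size s)%N && uniq s && cycle e s.

Definition girth_ge (T : finType) (e : rel T) (g : nat) :=
  forall s : seq T, is_cycle e s -> (g <= size s)%N.

Definition colorable (T : finType) (e : rel T) (n : nat) :=
  exists f : T -> 'I_n, forall x y, e x y -> f x != f y.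

Definition chromatic_number_eq (T : finType) (e : rel T) (k : nat) :=
  colorable e k /\ forall n, colorable e n -> (k <= n)%N.

(* the circle C^r is represented by [0, r) *)
Definition on_circle (R : realType) (r x : R) := 0 <= x < r.

Definition dC (R : realType) (r x y : R) : R :=
  Num.min `|x - y| (r - `|x - y|).

Definition antipode (R : realType) (r x : R) : R :=
  if x + r / 2 < r then x + r / 2 else x + r / 2 - r.

Definition circular_coloring (R : realType) (T : finType) (e sigma : rel T)
    (r : R) (f : T -> R) :=
  (forall v, on_circle r (f v)) /\
  (forall u v, e u v ->
     if sigma u v then 1 <= dC r (f u) (antipode r (f v))
     else 1 <= dC r (f u) (f v)).

Definition chi_c (R : realType) (T : finType) (e sigma : rel T) : R :=
  inf [set r : R | 2 <= r /\ exists f : T -> R, circular_coloring e sigma r f].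

(* Main.v *)
Require Import Defs.
From HB Require Import structures.
From mathcomp Require Import all_boot all_order all_algebra.
From mathcomp Require Import boolp classical_sets reals.
Import Order.TTheory GRing.Theory Num.Theory.
From mathcomp Require Import lra zify.
Import Order.TTheory GRing.Theory Num.Theory.

Import mathcomp.boot.eqtype mathcomp.boot.ssrnat mathcomp.boot.seq mathcomp.boot.path mathcomp.boot.fintype mathcomp.boot.finfun mathcomp.boot.bigop mathcomp.boot.finset.
Set Implicit Arguments. Unset Strict Implicit. Unset Printing Implicit Defensive.

Section Fam.
Variables (V I : finType) (A : I -> {set V}).
Definition others (F : {set I}) (i : I) : {set V} := \bigcup_(j in F :\ i) A j.
Definition leaf (F : {set I}) i := (i \in F) && (#|A i :&: others F i| <= 1).
Definition TL (l : nat) := forall F : {set I}, 2 <= #|F| <= l ->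
  exists i j, [/\ i != j, leaf F i & leaf F j].

Lemma card_le1_sub (X Y : {set V}) : X \subset Y -> #|Y| <= 1 -> #|X| <= 1.
Proof. by move=> /subset_leq_card h1 h2; apply: leq_trans h1 h2. Qed.

Lemma pointed (F : {set I}) i j (T : {set V}) : i != j -> leaf F i -> leaf F j -> #|T| <= 1 ->
  exists2 x, leaf F x & #|A x :&: (others F x :|: T)| <= 1.
Proof.
move=> ij /andP[iF li] /andP[jF lj] hT.
have [T0|[a Ta]] := set_0Vmem T.
  by exists i; rewrite ?T0 ?setU0 //; apply/andP.
have Ta1 : T = [set a].
  apply/eqP; rewrite eq_sym eqEcard sub1set Ta cards1 hT //.
case: (boolP (a \in others F i)) => ai.
  exists i; first by apply/andP.
  by rewrite Ta1 (setUidPl _) ?sub1set.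
exists j; first by apply/andP.
suff -> : A j :&: (others F j :|: T) = A j :&: others F j by [].
rewrite setIUr Ta1.
have -> : A j :&: [set a] = set0.
  apply/setP => x; rewrite !inE; apply/negbTE; apply/andP => -[xj /eqP xa].
  move: ai; rewrite -xa => /negP; apply; apply/bigcupP; exists j => //.
  by rewrite !inE eq_sym ij.
by rewrite setU0.
Qed.

Lemma PLs l : TL l -> forall F : {set I}, 1 <= #|F| <= l -> forall T : {set V}, #|T| <= 1 ->
  exists2 x, x \in F & #|A x :&: (others F x :|: T)| <= 1.
Proof.
move=> tl F /andP[F1 Fl] T hT.
case: (ltnP 1 #|F|) => F2.
  have [i [j [ij li lj]]] := tl F (introT andP (conj F2 Fl)).
  have [x /andP[xF _] h] := pointed ij li lj hT.
  by exists x.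
have /cards1P [i Fi] : #|F| == 1 by rewrite eqn_leq F2.
exists i; first by rewrite Fi set11.
have -> : others F i = set0.
  rewrite /others Fi setDv big_set0 //.
by rewrite set0U (card_le1_sub (subsetIr _ _) hT).
Qed.
End Fam.

Lemma TL_mono (V I : finType) (A B : I -> {set V}) l :
  (forall i, B i \subset A i) -> TL A l -> TL B l.
Proof.
move=> sub tl F hF; have [i [j [ij /andP[iF li] /andP[jF lj]]]] := tl F hF.
have H x : #|A x :&: others A F x| <= 1 -> #|B x :&: others B F x| <= 1.
  apply: card_le1_sub; apply: setISS => //.
  by apply/bigcupsP => y yF; apply: subset_trans (sub y) _; apply: bigcup_sup.
by exists i, j; split => //; apply/andP; split => //; apply: H.
Qed.

Lemma TL_inj (V W I : finType) (A : I -> {set V}) (h : V -> W) l :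
  injective h -> TL A l -> TL (fun i => h @: A i) l.
Proof.
move=> hi tl F hF; have [i [j [ij /andP[iF li] /andP[jF lj]]]] := tl F hF.
have H x : #|A x :&: others A F x| <= 1 -> #|h @: A x :&: others (fun i => h @: A i) F x| <= 1.
  have -> : others (fun i => h @: A i) F x = h @: others A F x.
    apply/setP => w; apply/bigcupP/imsetP => [[y yF /imsetP[v vA ->]]|[v /bigcupP[y yF vA] ->]].
      by exists v => //; apply/bigcupP; exists y.
    by exists y => //; apply/imsetP; exists v.
  by rewrite -imsetI ?card_imset //; move=> ? ? ? ?; apply: hi.
by exists i, j; split => //; apply/andP; split => //; apply: H.
Qed.

Lemma two_leaves (V I : finType) (S : I -> {set V}) m : TL S m ->
  forall C : {set I}, 1 < #|C| -> #|[set q in C | 1 < #|S q|]| <= m ->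
  exists q1 q2, [/\ q1 != q2, leaf S C q1 & leaf S C q2].
Proof.
move=> tl C C2 Cbm.
set Cs := [set q in C | #|S q| <= 1]; set Cb := [set q in C | 1 < #|S q|].
have small q : q \in Cs -> leaf S C q.
  rewrite inE => /andP[qC qS]; apply/andP; split => //.
  exact: card_le1_sub (subsetIl _ _) qS.
case: (ltnP 1 #|Cs|) => hs.
  have [x [y [xC yC xy]]] := card_gt1P hs.
  by exists x, y; split => //; apply: small.
case: (posnP #|Cs|) => hs0.
  have CCb : C = Cb.
    apply/setP => q; rewrite !inE; case qC: (q \in C) => //=.
    symmetry; rewrite ltnNge; apply/negP => h.
    have : q \in Cs by rewrite inE qC h.
    by rewrite (card0_eq hs0).
  have Cm : #|C| <= m by rewrite CCb.
  have [i [j [ij li lj]]] := tl C (introT andP (conj C2 Cm)).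
  by exists i, j.
have /cards1P [p Csp] : #|Cs| == 1 by rewrite eqn_leq hs hs0.
have pCs : p \in Cs by rewrite Csp set11.
have Cb1 : 1 <= #|Cb|.
  rewrite card_gt0; apply/set0Pn.
  have [x [y [xC yC xy]]] := card_gt1P C2.
  have [xp|xp] := eqVneq x p.
    exists y; rewrite inE yC /= ltnNge; apply/negP => h.
    have : y \in Cs by rewrite inE yC h.
    by rewrite Csp inE -xp eq_sym (negbTE xy).
  exists x; rewrite inE xC /= ltnNge; apply/negP => h.
  have : x \in Cs by rewrite inE xC h.
  by rewrite Csp inE (negbTE xp).
have hSp : #|S p| <= 1 by move: pCs; rewrite inE => /andP[].
have [q qCb hq] := PLs tl (introT andP (conj Cb1 Cbm)) hSp.
have qC : q \in C by move: qCb; rewrite inE => /andP[].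
have qp : q != p.
  apply/negP => /eqP qp; move: qCb; rewrite inE qp => /andP[_].
  by rewrite ltnNge hSp.
exists q, p; split => //; last by apply: small.
apply/andP; split => //.
apply: card_le1_sub hq; apply: setIS.
apply/bigcupsP => y; rewrite !inE => /andP[yq yC].
case: (ltnP 1 #|S y|) => hy.
  apply: subsetU; apply/orP; left; apply: bigcup_sup.
  by rewrite !inE yq yC.
have : y \in Cs by rewrite inE yC hy.
by rewrite Csp inE => /eqP ->; apply: subsetUr.
Qed.

Lemma card_bigcup_le (I T : finType) (P : pred I) (A : I -> {set T}) :
  #|\bigcup_(i | P i) A i| <= \sum_(i | P i) #|A i|.
Proof.
elim/big_rec2: _ => [|i n X _ h]; first by rewrite cards0.
by rewrite (leq_trans (leq_card_setU _ _)) // leq_add2l.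
Qed.

Section Amalg.
Variables (W Q J : finType) (B : Q * J -> {set W}) (Z : {set W}) (Qs : Q -> {set W}) (l : nat).
Hypothesis H1 : forall q, TL (fun e => B (q,e)) l.
Hypothesis H2 : forall q e, #|B (q,e) :&: Z| <= 1.
Hypothesis H2' : forall q e, B (q,e) :&: Z \subset Qs q.
Hypothesis H3 : forall q q' e e', q != q' -> B (q,e) :&: B (q',e') \subset Z.
Hypothesis HQ : TL Qs l./2.

Lemma amalg_TL : TL B l.
Proof.
move=> F /andP[F2 Fl].
pose C := [set p.1 | p in F].
pose Fq q := [set e | (q,e) \in F].
pose S q := \bigcup_(e in Fq q) (B (q,e) :&: Z).
have FqF q : #|Fq q| <= #|F|.
  rewrite -(card_in_imset (f := fun e => (q,e)) (D := Fq q)); last by move=> ? ? _ _ [].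
  by apply: subset_leq_card; apply/subsetP => x /imsetP[e]; rewrite inE => ? ->.
have key q e : (q,e) \in F ->
   B (q,e) :&: others B F (q,e) \subset
   B (q,e) :&: (others (fun e => B (q,e)) (Fq q) e :|: (S q :&: others S C q)).
  move=> qeF; apply/subsetP => x; rewrite !inE => /andP[xB /bigcupP[[q' e'] ]].
  rewrite !inE => /andP[ne qeF'] xB'; rewrite xB /=.
  have [qq|qq] := eqVneq q' q.
    apply/orP; left; apply/bigcupP; exists e'; last by rewrite -qq.
    rewrite !inE -qq qeF' andbT; apply: contra ne => /eqP ->; by rewrite qq.
  have xZ : x \in Z.
    have qq' : q != q' by rewrite eq_sym.
    by apply: (subsetP (H3 e e' qq')); rewrite inE xB xB'.
  apply/orP; right; apply/andP; split.
    by apply/bigcupP; exists e; rewrite ?inE ?xB ?xZ.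
  apply/bigcupP; exists q'.
    by rewrite in_setD1 qq /=; apply/imsetP; exists (q',e').
  by apply/bigcupP; exists e'; rewrite ?inE ?xB' ?xZ.
have leafq q : q \in C -> #|S q :&: others S C q| <= 1 -> exists e, leaf B F (q,e).
  move=> qC hT.
  have Fq1 : 1 <= #|Fq q| <= l.
    rewrite (leq_trans (FqF q) Fl) andbT card_gt0; apply/set0Pn.
    by move: qC => /imsetP[[q' e] qeF ->]; exists e; rewrite inE.
  have [e eF he] := PLs (H1 q) Fq1 hT.
  exists e; apply/andP; split; first by move: eF; rewrite inE.
  apply: leq_trans (subset_leq_card (key q e _)) he.
  by move: eF; rewrite inE.
case: (ltnP 1 #|C|) => C2.
  have HS : TL S l./2.
    apply: TL_mono HQ => q; apply/bigcupsP => e _; exact: H2'.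
  have Cb : #|[set q in C | 1 < #|S q|]| <= l./2.
    set Cb := [set q in C | 1 < #|S q|].
    have h1 : (#|Cb| * 2 <= \sum_(q in Cb) #|Fq q|).
      rewrite -sum_nat_const; apply: leq_sum => q; rewrite inE => /andP[_ h].
      apply: leq_trans h _; apply: leq_trans (card_bigcup_le _ _) _.
      rewrite -sum1_card; apply: leq_sum => e _.
      exact: H2.
    have h2 : \sum_(q in Cb) #|Fq q| <= #|F|.
      have -> : #|F| = \sum_q \sum_(e | (q,e) \in F) 1.
        rewrite pair_big_dep /= sum1_card; apply: eq_card => -[a b] //.
      rewrite [X in _ <= X](bigID (mem Cb)) /=; apply: leq_trans (leq_addr _ _).
      rewrite leq_eqVlt; apply/orP; left; apply/eqP; apply: eq_bigr => q _.
      by rewrite -sum1_card; apply: eq_bigl => e; rewrite inE.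
    have h3 := leq_trans h1 (leq_trans h2 Fl).
    by rewrite -[#|Cb|]half_double -muln2; apply: half_leq.
  have [q1 [q2 [q12 /andP[q1C l1] /andP[q2C l2]]]] := two_leaves HS C2 Cb.
  have [e1 le1] := leafq q1 q1C l1; have [e2 le2] := leafq q2 q2C l2.
  exists (q1,e1), (q2,e2); split => //.
  by apply: contra q12 => /eqP [-> _].
have [p pF] : exists p, p \in F.
  by apply/set0Pn; rewrite -card_gt0; apply: leq_trans F2.
set q := p.1.
have Cq : C = [set q].
  apply/eqP; rewrite eq_sym eqEcard sub1set cards1 C2 andbT.
  by apply/imsetP; exists p.
have FF : #|F| <= #|Fq q|.
  rewrite -(card_in_imset (f := fun e => (q,e)) (D := Fq q)); last by move=> ? ? _ _ [].
  apply: subset_leq_card; apply/subsetP => -[a b] abF.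
  have : a \in C by apply/imsetP; exists (a,b).
  rewrite Cq inE => /eqP aq; subst a; apply/imsetP; exists b => //.
  by rewrite inE.
have Fq2 : 2 <= #|Fq q| <= l by rewrite (leq_trans F2 FF) (leq_trans (FqF q) Fl).
have [e1 [e2 [e12 l1 l2]]] := H1 q Fq2.
have oC : others S C q = set0.
  by rewrite /others Cq setDv big_set0.
have lf e : leaf (fun e => B (q,e)) (Fq q) e -> leaf B F (q,e).
  move=> /andP[eF he]; have eF' : (q,e) \in F by move: eF; rewrite inE.
  apply/andP; split => //.
  apply: leq_trans (subset_leq_card (key q e eF')) _.
  by rewrite oC setI0 setU0.
exists (q,e1), (q,e2); split; [|exact: lf|exact: lf].
by apply: contra e12 => /eqP [->].
Qed.
End Amalg.

Record hyp (u : nat) := Hyp { hV : finType; hE : finType; hinc : hE -> 'I_u -> hV }.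
Definition hA u (H : hyp u) (q : hE H) := [set hinc q i | i : 'I_u].
Definition hinj u (H : hyp u) := forall q, injective (@hinc u H q).
Definition chi_gt u (H : hyp u) c := forall col : hV H -> 'I_c,
  exists q, exists k, forall i, col (hinc q i) = k.

Section Psys.
Variables (a u : nat) (TE : finType) (tpl : TE -> 'I_u -> 'I_a).
Hypothesis tpl_inj : forall j, injective (tpl j).

Record psys := PS {
  pV : finType; pE : finType;
  ppart : pV -> 'I_a;
  pinc : pE -> 'I_u -> pV;
  pty : pE -> TE;
  ppartite : forall e p, ppart (pinc e p) = tpl (pty e) p }.

Definition pA (P : psys) (e : pE P) := [set pinc e p | p : 'I_u].

Definition Inv (P : psys) (t c : nat) := forall col : pV P -> 'I_c,
  exists kap : 'I_a -> 'I_c, forall j : TE, exists e, pty e = j /\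
    forall p, tpl j p < t -> col (pinc e p) = kap (tpl j p).

Section Step.
Variables (P : psys) (t : 'I_a).
Definition PT := {v : pV P | ppart v == t}.
Variable (Q : hyp #|{: PT}|).

Definition sV := (hV Q + (hE Q * pV P))%type.
Definition copy (q : hE Q) (v : pV P) : sV :=
  match insub v : option PT with
  | Some x => inl (hinc q (enum_rank x))
  | None => inr (q, v) end.
Definition spart (x : sV) : 'I_a :=
  match x with inl _ => t | inr (_, v) => ppart v end.

Lemma spart_copy q v : spart (copy q v) = ppart v.
Proof.
rewrite /copy; case: insubP => [x /eqP h xv|_] //=.
Qed.

Definition sinc (e : (hE Q * pE P)%type) p := copy e.1 (pinc e.2 p).
Definition sty (e : (hE Q * pE P)%type) := pty e.2.
Lemma spartite e p : spart (sinc e p) = tpl (sty e) p.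
Proof. by rewrite /sinc spart_copy ppartite. Qed.

Definition step := @PS sV (hE Q * pE P)%type spart sinc sty spartite.

Lemma copy_inj q : hinj Q -> injective (copy q).
Proof.
move=> hq v1 v2; rewrite /copy.
case: insubP => [x1 _ xv1|_]; case: insubP => [x2 _ xv2|_] //.
- move=> [] /hq /enum_rank_inj x12; by rewrite -xv1 -xv2 x12.
- by move=> [].
Qed.

Lemma copy_inl q v x : copy q v = inl x -> exists2 y : PT, val y = v & x = hinc q (enum_rank y).
Proof.
rewrite /copy; case: insubP => [y _ yv|_] // [] <-.
by exists y.
Qed.

Lemma copy_inr q v q' v' : copy q v = inr (q', v') -> q = q'.
Proof. by rewrite /copy; case: insubP => [y _ yv|_] // [] ->. Qed.

Lemma step_Inv (c : nat) (tt : nat) : val t = tt -> chi_gt Q c -> Inv P tt c -> Inv step tt.+1 c.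
Proof.
move=> ht hQ hI col'.
have [q [k0 hk0]] := hQ (fun x => col' (inl x)).
have [kap hk] := hI (fun v => col' (copy q v)).
exists (fun i => if i == t then k0 else kap i) => j.
have [e [ej he]] := hk j.
exists (q, e); split => // p hp.
rewrite /= /sinc /=.
case: (eqVneq (tpl j p) t) => hjt.
  rewrite /copy; case: insubP => [x _ xv|].
    by rewrite hk0.
  by rewrite ppartite ej hjt eqxx.
have hlt : tpl j p < tt.
  rewrite ltn_neqAle -ltnS hp andbT -ht; apply: contra hjt => /eqP h; apply/eqP/val_inj; exact: h.
by rewrite (he p hlt).
Qed.

Lemma step_TL l : TL (@pA P) l -> hinj Q -> TL (@hA _ Q) l./2 -> TL (@pA step) l.
Proof.
move=> hP hq hQ.
pose Z := [set x : sV | if x is inl _ then true else false].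
pose Qs q := [set inl y | y in hA q] : {set sV}.
have pAE q e : @pA step (q,e) = [set copy q v | v in @pA P e].
  apply/setP => x; apply/imsetP/imsetP => [[p _ ->]|[v /imsetP[p _ ->] ->]].
    by exists (pinc e p) => //; apply/imsetP; exists p.
  by exists p.
apply: (@amalg_TL _ _ _ (@pA step) Z Qs).
- move=> q; apply: TL_mono (TL_inj (@copy_inj q hq) hP) => e.
  by rewrite pAE subxx.
- move=> q e; apply/card_le1_eqP => x y.
  rewrite !inE => /andP[/imsetP[p1 _ ->] h1] /andP[/imsetP[p2 _ ->] h2].
  have ht p : (if sinc (q, e) p is inl _ then true else false) -> tpl (pty e) p = t.
    rewrite -ppartite /sinc /=; case E: (copy q (pinc e p)) => [z|] // _.
    have [y' yv _] := copy_inl E; rewrite -yv; apply/eqP; exact: (valP y').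
  by rewrite (tpl_inj (etrans (ht _ h1) (esym (ht _ h2)))).
- move=> q e; apply/subsetP => x; rewrite !inE => /andP[/imsetP[p _ ->]].
  change ((if copy q (pinc e p) is inl _ then true else false) -> copy q (pinc e p) \in Qs q).
  case E: (copy q (pinc e p)) => [z|] // _.
  have [y' _ ->] := copy_inl E.
  by apply/imsetP; exists (hinc q (enum_rank y')) => //; apply/imsetP; exists (enum_rank y').
- move=> q q' e e' qq; apply/subsetP => x; rewrite !inE => /andP[/imsetP[p _ ->]].
  move=> /imsetP[p' _].
  change (copy q (pinc e p) = copy q' (pinc e' p') -> (if copy q (pinc e p) is inl _ then true else false)).
  case E: (copy q (pinc e p)) => [z|[r w]] // E'.
  have h1 := copy_inr E; have h2 := copy_inr (esym E').
  by rewrite h1 h2 eqxx in qq.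
- have hi : injective (@inl (hV Q) (hE Q * pV P)%type) by move=> ? ? [].
  exact: TL_inj hi hQ.
Qed.

End Step.

Definition P0 := @PS (TE * 'I_u)%type TE (fun x => tpl x.1 x.2) (fun j p => (j,p)) id (fun _ _ => erefl).

Lemma P0_TL l : TL (@pA P0) l.
Proof.
move=> F /andP[F2 _]; have [i [j [iF jF ij]]] := card_gt1P F2.
have lf x : x \in F -> leaf (@pA P0) F x.
  move=> xF; apply/andP; split => //.
  apply: (@leq_trans 0) => //; rewrite leqn0 cards_eq0; apply/eqP/setP => y.
  rewrite !inE; apply/negbTE/andP => -[/imsetP[p _ ->] /bigcupP[z]].
  by rewrite !inE => /andP[zx _] /imsetP[p' _ [zE _]]; rewrite zE eqxx in zx.
by exists i, j; split => //; apply: lf.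
Qed.

Lemma P0_Inv c : 0 < c -> Inv P0 0 c.
Proof.
move=> c0 col; exists (fun _ => Ordinal c0) => j; exists j; split => //.
Qed.

Lemma GC c l : 0 < c ->
  (forall w, exists Q : hyp w, [/\ hinj Q, chi_gt Q c & TL (@hA _ Q) l./2]) ->
  exists P : psys, TL (@pA P) l /\ Inv P a c.
Proof.
move=> c0 hQ.
suff: forall t, t <= a -> exists P : psys, TL (@pA P) l /\ Inv P t c by apply.
elim => [_|t IH ta]; first by exists P0; split; [apply: P0_TL|apply: P0_Inv].
have [P [hP hI]] := IH (ltnW ta).
pose T := Ordinal ta.
have [Q [qi qc qt]] := hQ #|{: PT P T}|.
exists (step Q); split; first exact: step_TL.
exact: step_Inv.
Qed.

End Psys.

Lemma pigeon w c (kap : 'I_(w*c) -> 'I_c) : 0 < c ->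
  exists f : {ffun 'I_w -> 'I_(w*c)}, injectiveb f /\ exists k, forall i, kap (f i) = k.
Proof.
move=> c0.
have wc : w <= w * c by rewrite leq_pmulr.
case: (posnP w) => w0.
  exists [ffun i => widen_ord wc i]; split.
    by apply/injectiveP => i j; rewrite !ffunE => /(congr1 val) /= h; apply: val_inj.
  by exists (Ordinal c0); case=> i hi; exfalso; move: hi; rewrite w0.
pose S k := [set x | kap x == k].
have [k hk] : exists k, w <= #|S k|.
  case: (boolP [exists k, w <= #|S k|]) => [/existsP //|/existsPn h]; exfalso.
  have hs : \sum_(k < c) #|S k| = w * c.
    rewrite -[X in _ = X]card_ord -sum1_card (partition_big kap predT) //=.
    by apply: eq_bigr => k _; rewrite -sum1_card; apply: eq_bigl => x; rewrite inE.
  have : \sum_(k < c) #|S k| <= \sum_(k < c) w.-1.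
    apply: leq_sum => k _; have := h k; rewrite -ltnNge; lia.
  rewrite hs sum_nat_const card_ord; lia.
have [x0 x0S] : exists x0, x0 \in S k.
  by apply/set0Pn; rewrite -card_gt0; apply: leq_trans hk.
have sz : w <= size (enum (S k)) by rewrite -cardE.
exists [ffun i : 'I_w => nth x0 (enum (S k)) i]; split.
  apply/injectiveP => i j; rewrite !ffunE => /eqP.
  rewrite nth_uniq ?enum_uniq //; try by apply: leq_trans sz.
  by move=> /eqP h; apply: val_inj.
exists k => i; rewrite ffunE.
have : nth x0 (enum (S k)) i \in S k.
  by rewrite -mem_enum; apply: mem_nth; apply: leq_trans sz.
by rewrite inE => /eqP.
Qed.

Definition KE w c := {f : {ffun 'I_w -> 'I_(w*c)} | injectiveb f}.
Definition ktpl w c (f : KE w c) (i : 'I_w) : 'I_(w*c) := val f i.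
Lemma ktpl_inj w c (f : KE w c) : injective (ktpl f).
Proof. by move=> i j; rewrite /ktpl; have /injectiveP := valP f; apply. Qed.

Definition Kc w c : hyp w := @Hyp w 'I_(w*c) (KE w c) (@ktpl w c).

Fixpoint lseq n := if n is n'.+1 then (lseq n').*2.+1 else 0.
Lemma lseq_ge n : n <= lseq n.
Proof. by elim: n => //= n IH; rewrite ltnS -addnn (leq_trans IH) ?leq_addr. Qed.

Lemma EH c n : 0 < c -> forall w, exists Q : hyp w, [/\ hinj Q, chi_gt Q c & TL (@hA _ Q) (lseq n)].
Proof.
move=> c0; elim: n => [|n IH] w.
  exists (Kc w c); split.
  - by move=> q; apply: ktpl_inj.
  - move=> col; have [f [fi [k hk]]] := pigeon col c0.
    by exists (exist _ f fi), k.
  - by move=> F /andP[F2 /(leq_trans F2)].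
have hQ : forall w', exists Q : hyp w', [/\ hinj Q, chi_gt Q c & TL (@hA _ Q) (lseq n.+1)./2].
  by move=> w'; rewrite /= uphalf_double; apply: IH.
have [P [hP hI]] := GC (@ktpl_inj w c) c0 hQ.
exists (@Hyp w (pV P) (pE P) (@pinc _ _ _ _ P)); split.
- move=> e i j /(congr1 (@ppart _ _ _ _ P)); rewrite !ppartite; apply: ktpl_inj.
- move=> col; have [kap hk] := hI col.
  have [f [fi [k hkf]]] := pigeon kap c0.
  have [e [ej he]] := hk (exist _ f fi).
  exists e, k => i; rewrite /= he //; first by rewrite /ktpl /= hkf.
- exact: hP.
Qed.

Lemma nn_neq (T : eqType) (s : seq T) y : uniq s -> 2 < size s -> y \in s ->
  (next s y != y) && (next s (next s y) != y).
Proof.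
move=> us s3 ys; case: (rot_to ys) => i s' hr.
have us' : uniq (y :: s') by rewrite -hr rot_uniq.
have s3' : 2 < size (y :: s') by rewrite -hr size_rot.
rewrite -!(next_rot i us) hr.
case: s' hr us' s3' => [|z [|w r]] //= _.
rewrite !inE => /andP[/norP[yz /norP[yw _]] /andP[/norP[zw _] _]] _.
rewrite eqxx /= eq_sym yz /=.
rewrite (negbTE yz) eqxx /=.
by rewrite eq_sym.
Qed.

Lemma notleaf (T I : finType) (A : I -> {set T}) (F : {set I}) i j1 j2 x y :
  x != y -> x \in A i -> y \in A i -> j1 \in F -> j2 \in F -> j1 != i -> j2 != i ->
  x \in A j1 -> y \in A j2 -> ~~ leaf A F i.
Proof.
move=> xy xi yi j1F j2F j1i j2i xj1 yj2; apply/negP => /andP[_ h].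
have : #|[set x; y]| <= 1.
  apply: leq_trans h; apply: subset_leq_card; apply/subsetP => z.
  rewrite !inE => /orP[]/eqP ->; rewrite ?xi ?yi /=; apply/bigcupP.
    by exists j1; rewrite // !inE j1i.
  by exists j2; rewrite // !inE j2i.
by rewrite cards2 xy.
Qed.

Lemma girth_TL (T I : finType) (e : rel T) (A : I -> {set T}) l :
  TL A l -> 2 <= l -> irreflexive e -> (forall x y, e x y -> exists E, A E = [set x; y]) ->
  girth_ge e l.+1.
Proof.
move=> tl l2 irr he s /andP[/andP[s3 us] cs].
rewrite ltnNge; apply/negP => sl.
have uE E1 E2 x y : x != y -> A E1 = [set x; y] -> A E2 = [set x; y] -> E1 = E2.
  move=> xy h1 h2; apply/eqP; apply/negPn/negP => E12.
  have hF : 2 <= #|[set E1; E2]| <= l by rewrite cards2 E12.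
  have [i [j [ij li lj]]] := tl _ hF.
  have nl : forall i, i \in [set E1; E2] -> ~~ leaf A [set E1;E2] i.
    move=> i'; rewrite !inE => /orP[]/eqP ->.
      apply: (@notleaf _ _ _ _ _ E2 E2 x y) => //;
        rewrite ?inE ?eqxx ?orbT ?h1 ?h2 ?set21 ?set22 // eq_sym //.
    apply: (@notleaf _ _ _ _ _ E1 E1 x y) => //;
      rewrite ?inE ?eqxx ?orbT ?h1 ?h2 ?set21 ?set22 //.
  by have := nl i (andP li).1; rewrite li.
have nxx x : x \in s -> next s x != x.
  by move=> xs; have := next_cycle cs xs; apply: contraL => /eqP ->; rewrite irr.
pose F := [set E | [exists x, (x \in s) && (A E == [set x; next s x])]].
have inF E x : x \in s -> A E = [set x; next s x] -> E \in F.
  by move=> xs h; rewrite inE; apply/existsP; exists x; rewrite xs h eqxx.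
have ex x : x \in s -> exists2 E, E \in F & A E = [set x; next s x].
  by move=> xs; have [E hE] := he _ _ (next_cycle cs xs); exists E => //; apply: inF xs hE.
have Fs : #|F| <= size s.
  pose S := [set x | x \in s].
  have : F \subset \bigcup_(x in S) [set E | A E == [set x; next s x]].
    apply/subsetP => E; rewrite inE => /existsP[x /andP[xs /eqP h]].
    by apply/bigcupP; exists x; rewrite inE ?h ?eqxx.
  move=> /subset_leq_card h; apply: leq_trans h _.
  apply: leq_trans (card_bigcup_le _ _) _.
  have -> : size s = \sum_(x in S) 1.
    by rewrite sum1_card cardsE; apply/esym/card_uniqP.
  apply: leq_sum => x; rewrite inE => xs.
  apply/card_le1_eqP => E1 E2; rewrite !inE => /eqP h1 /eqP h2.
  by apply: (uE _ _ x (next s x)); rewrite // eq_sym nxx.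
have [x0 x0s] : exists x0, x0 \in s by case: (s) s3 => [|y ?] //; exists y; rewrite inE eqxx.
have nn y : y \in s -> next s (next s y) != y by move=> ys; case/andP: (nn_neq us s3 ys).
have F2 : 2 <= #|F| <= l.
  rewrite (leq_trans Fs sl) andbT.
  have [E1 E1F h1] := ex _ x0s.
  have [E2 E2F h2] := ex _ (etrans (mem_next _ _) x0s).
  apply/card_gt1P; exists E1, E2; split => //.
  apply/negP => /eqP E12; move: h2; rewrite -E12 h1 => /setP /(_ x0).
  rewrite !inE eqxx /= => /esym/orP[]/eqP h.
    by move: (nxx _ x0s); rewrite -h eqxx.
  by move: (nn _ x0s); rewrite -h eqxx.
have [i [j [ij li lj]]] := tl _ F2.
move: (li); rewrite /leaf => /andP[iF _].
move: iF; rewrite inE => /existsP[x /andP[xs /eqP hi]].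
pose px := prev s x.
have pxs : px \in s by rewrite mem_prev.
have npx : next s px = x by rewrite /px next_prev.
have nxs : next s x \in s by rewrite mem_next.
have [E' E'F h'] := ex _ pxs.
have [E'' E''F h''] := ex _ nxs.
have : ~~ leaf A F i.
  apply: (@notleaf _ _ _ _ _ E' E'' x (next s x)) => //.
  - by rewrite eq_sym nxx.
  - by rewrite hi set21.
  - by rewrite hi set22.
  - apply/negP => /eqP E'i; move: h'; rewrite E'i hi npx => /setP /(_ px).
    rewrite !inE eqxx /= => /orP[]/eqP h.
      by move: (nxx _ pxs); rewrite npx h eqxx.
    by move: (nn _ pxs); rewrite npx -h eqxx.
  - apply/negP => /eqP E''i; move: h''; rewrite E''i hi => /setP /(_ x).
    rewrite !inE eqxx /= => /esym/orP[]/eqP h.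
      by move: (nxx _ xs); rewrite -h eqxx.
    by move: (nn _ xs); rewrite -h eqxx.
  - by rewrite h' npx set22.
  - by rewrite h'' set21.
by rewrite li.
Qed.

Import boolp classical_sets reals.
Import Order.TTheory GRing.Theory Num.Theory.

Local Open Scope ring_scope.

Section Reals.
Variable R : realType.

Ltac absc t := let h := fresh "h" in
  have [h|h] := lerP 0 t; [rewrite ?(ger0_norm h)|rewrite ?(ltr0_norm h)].

Ltac absall := repeat match goal with |- context[ `|?t| ] => absc t end.

Lemma dC_geP (r x y d : R) : d <= dC r x y -> d <= `|x - y| /\ d <= r - `|x - y|.
Proof. by rewrite /dC le_min => /andP[]. Qed.

Lemma LP (r x y za zb del : R) :
  0 <= za <= x -> x < za + del -> 0 <= zb <= y -> y < zb + del ->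
  1 <= dC r x y -> 1 - 2 * del <= `|za - zb| /\ 1 - 2 * del <= r - `|za - zb|.
Proof.
move=> /andP[h1 h2] h3 /andP[h4 h5] h6 /dC_geP [].
absc (x - y); absc (za - zb); move=> *; split; lra.
Qed.

Lemma LN (r x y za zb del : R) :
  0 <= za <= x -> x < za + del -> 0 <= zb <= y -> y < zb + del -> x < r -> y < r ->
  1 <= dC r x (antipode r y) ->
  `|za - zb| <= r / 2 - (1 - 2 * del) \/ r - `|za - zb| <= r / 2 - (1 - 2 * del).
Proof.
move=> /andP[h1 h2] h3 /andP[h4 h5] h6 h7 h8 /dC_geP [].
rewrite /antipode; case: ifP => [ha|/negbT ha]; rewrite ?ltNge ?negbK in ha.
- by absc (x - (y + r / 2)); absc (za - zb); move=> *; first [by left; lra | by right; lra].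
- by absc (x - (y + r / 2 - r)); absc (za - zb); move=> *; first [by left; lra | by right; lra].
Qed.

Lemma LW (r za zb d : R) : 0 <= za < r -> 0 <= zb < r ->
  d <= `|za - zb| -> d <= r - `|za - zb| ->
  (`|za - zb| <= r / 2 - d \/ r - `|za - zb| <= r / 2 - d) ->
  let wa := if za < r / 2 then za else za - r / 2 in
  let wb := if zb < r / 2 then zb else zb - r / 2 in
  d <= `|wa - wb| /\ d <= r / 2 - `|wa - wb|.
Proof.
move=> /andP[a1 a2] /andP[b1 b2] h1 h2 h3 wa wb; rewrite /wa /wb.
case: ifP => [ha|/negbT ha]; rewrite ?ltNge ?negbK in ha;
case: ifP => [hb|/negbT hb]; rewrite ?ltNge ?negbK in hb;
move: h1 h2 h3; absall; move=> h1 h2 [] h3; split; lra.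
Qed.

Lemma pack (k : nat) (w : 'I_k -> R) (d rho : R) : 0 < d -> (1 < k)%N ->
  (forall i j, i != j -> d <= `|w i - w j| /\ d <= rho - `|w i - w j|) ->
  k%:R * d <= rho.
Proof.
move=> d0 k1 hw.
have lin : forall n (S : {set 'I_k}), #|S| = n.+1 ->
    exists i j, [/\ i \in S, j \in S & n%:R * d <= w j - w i].
  elim => [|n IH] S hS.
    have [i Si] : exists i, i \in S by apply/set0Pn; rewrite -card_gt0 hS.
    by exists i, i; rewrite Si subrr mul0r.
  have [i0 Si0] : exists i, i \in S by apply/set0Pn; rewrite -card_gt0 hS.
  case: (@arg_maxP _ _ _ i0 (mem S) w Si0) => M MS Mmax.
  have MS' : M \in S := MS.
  have hS' : #|S :\ M| = n.+1 by rewrite (cardsD1 M) MS' in hS; case: hS.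
  have [i [j [iS jS hij]]] := IH _ hS'.
  exists i, M; split => //; first by move: iS; rewrite inE => /andP[].
  move: jS; rewrite !inE => /andP[jM jS].
  have [h _] := hw _ _ jM; have hM : w j <= w M := Mmax _ jS.
  move: h; absc (w j - w M) => *; rewrite -natr1 mulrDl mul1r; lra.
have hT : #|[set: 'I_k]%SET| = k.-1.+1 by rewrite cardsT card_ord prednK // ltnW.
have [i [j [_ _ hij]]] := lin k.-1 _ hT.
have ij : i != j.
  apply/negP => /eqP ij; move: hij; rewrite ij subrr.
  have : 0 < k.-1%:R * d by rewrite mulr_gt0 // ltr0n -ltnS prednK // ltnW.
  move=> *; lra.
have [h1 h2] := hw _ _ ij.
have k1' : k%:R = k.-1%:R + 1 :> R by rewrite natr1 prednK // ltnW.
move: h1 h2; absc (w i - w j) => *; rewrite k1' mulrDl mul1r; lra.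
Qed.
End Reals.

Ltac absc t := let h := fresh "h" in
  have [h|h] := lerP 0%R t; [rewrite ?(ger0_norm h)|rewrite ?(ltr0_norm h)].
Ltac absall := repeat match goal with |- context[ Num.norm ?t ] => absc t end.

Section G.
Variable k : nat.
Definition TEk := {x : 'I_k * 'I_k * bool | x.1.1 != x.1.2}.
Definition tplk (x : TEk) (p : 'I_2) : 'I_k := if p == ord0 then (val x).1.1 else (val x).1.2.
Lemma tplk_inj x : injective (tplk x).
Proof.
have := valP x; rewrite /tplk => hx.
move=> [[|[|p]] hp] [[|[|q]] hq] //= h.
- by apply: val_inj.
- by rewrite h eqxx in hx.
- by rewrite h eqxx in hx.
- by apply: val_inj.
Qed.

Variables (P : psys tplk) (l : nat) (hl : (2 <= l)%N) (hP : TL (@pA _ _ _ _ P) l).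

Definition o0 : 'I_2 := ord0.
Definition o1 : 'I_2 := ord_max.
Definition gE (E : pE P) x y :=
  ((pinc E o0 == x) && (pinc E o1 == y)) || ((pinc E o0 == y) && (pinc E o1 == x)).
Definition ge_ : rel (pV P) := fun x y => [exists E, gE E x y].
Definition sg (E : pE P) := (val (pty E)).2.
Definition gs : rel (pV P) := fun x y => [exists E, sg E && gE E x y].

Lemma part01 (E : pE P) : ppart (pinc E o0) != ppart (pinc E o1).
Proof. by rewrite !ppartite; apply/negP => /eqP /tplk_inj. Qed.

Lemma inc01 (E : pE P) : pinc E o0 != pinc E o1.
Proof. by apply: contra (part01 E) => /eqP ->. Qed.

Lemma pA2 (E : pE P) : pA E = [set pinc E o0; pinc E o1].
Proof.
apply/setP => x; rewrite !inE; apply/imsetP/orP => [[[[|[|p]] hp] _ ->]|[]/eqP ->] //.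
- by left; apply/eqP; congr pinc; apply: val_inj.
- by right; apply/eqP; congr pinc; apply: val_inj.
- by exists o0.
- by exists o1.
Qed.

Lemma gE_sym (E : pE P) x y : gE E x y = gE E y x.
Proof. by rewrite /gE orbC. Qed.

Lemma gE_set (E : pE P) x y : gE E x y -> pA E = [set x; y].
Proof.
rewrite pA2 => /orP[]/andP[/eqP -> /eqP ->] //.
by rewrite finset.setUC.
Qed.

Lemma edge_uniq (E1 E2 : pE P) : pA E1 = pA E2 -> E1 = E2.
Proof.
move=> h; apply/eqP; apply/negPn/negP => E12.
have hF : (2 <= #|[set E1; E2]| <= l)%N by rewrite cards2 E12.
have [i [j [ij li lj]]] := hP hF.
have xy := inc01 E1.
have nl : forall i, i \in [set E1; E2] -> ~~ leaf (@pA _ _ _ _ P) [set E1;E2] i.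
  move=> i'; rewrite !inE => /orP[]/eqP ->.
    apply: (@notleaf _ _ _ _ _ E2 E2 (pinc E1 o0) (pinc E1 o1)) => //;
      rewrite -?h ?pA2 ?inE ?eqxx ?orbT // eq_sym //.
  apply: (@notleaf _ _ _ _ _ E1 E1 (pinc E1 o0) (pinc E1 o1)) => //;
    rewrite -?h ?pA2 ?inE ?eqxx ?orbT //.
by have := nl i (andP li).1; rewrite li.
Qed.

Lemma gs_E (E : pE P) : gs (pinc E o0) (pinc E o1) = sg E.
Proof.
apply/existsP/idP => [[E' /andP[s' g']]|sE].
  have /gE_set h := g'; rewrite -pA2 in h; by rewrite -(edge_uniq h).
by exists E; rewrite sE /gE !eqxx.
Qed.

Lemma ge_E (E : pE P) : ge_ (pinc E o0) (pinc E o1).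
Proof. by apply/existsP; exists E; rewrite /gE !eqxx. Qed.

Lemma ge_sym : symmetric ge_.
Proof. by move=> x y; apply/existsP/existsP => -[E h]; exists E; rewrite gE_sym. Qed.

Lemma gs_sym : symmetric gs.
Proof. by move=> x y; apply/existsP/existsP => -[E h]; exists E; rewrite gE_sym. Qed.

Lemma ge_irr : irreflexive ge_.
Proof.
move=> x; apply/existsP => -[E]; rewrite /gE orbb => /andP[/eqP h1 /eqP h2].
by move: (inc01 E); rewrite h1 h2 eqxx.
Qed.

Lemma ge_edge x y : ge_ x y -> exists E, pA E = [set x; y].
Proof. by move=> /existsP[E /gE_set h]; exists E. Qed.

Lemma ge_part x y : ge_ x y -> ppart x != ppart y.
Proof.
move=> /existsP[E] /orP[]/andP[/eqP <- /eqP <-]; first exact: part01.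
by rewrite eq_sym part01.
Qed.

Lemma girth_P : girth_ge ge_ l.+1.
Proof. exact: girth_TL hP hl ge_irr ge_edge. Qed.

Lemma colorable_k : colorable ge_ k.
Proof. by exists (@ppart _ _ _ _ P) => x y /ge_part. Qed.

Local Open Scope ring_scope.

Lemma circ_from_col (R : realType) n : (0 < n)%N -> colorable ge_ n ->
  exists f : pV P -> R, circular_coloring ge_ gs (2 * n)%:R f.
Proof.
move=> n0 [col hcol].
exists (fun v => (col v : nat)%:R); split.
  move=> v; rewrite /on_circle ler0n /= natrM.
  have : (col v : nat)%:R + 1 <= n%:R :> R by rewrite natr1 ler_nat.
  have : 1 <= n%:R :> R by rewrite ler1n.
  move=> *; lra.
move=> u v huv.
have hu : (col u : nat)%:R + 1 <= n%:R :> R by rewrite natr1 ler_nat.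
have hv : (col v : nat)%:R + 1 <= n%:R :> R by rewrite natr1 ler_nat.
have hu0 : 0 <= (col u : nat)%:R :> R by [].
have hv0 : 0 <= (col v : nat)%:R :> R by [].
rewrite natrM /dC le_min.
case: (gs u v).
  rewrite /antipode.
  case: ifP => [_|/negbT]; last by rewrite -leNgt => *; lra.
  absall => *; apply/andP; split; lra.
have hne : (col u : nat) != col v by apply: contra (hcol _ _ huv) => /eqP h; apply/eqP/val_inj.
have : (col u : nat)%:R + 1 <= (col v : nat)%:R :> R \/ (col v : nat)%:R + 1 <= (col u : nat)%:R :> R.
  rewrite !natr1 !ler_nat; case: (ltngtP (col u) (col v)) => h; [left|right|] => //.
  by rewrite h eqxx in hne.
rewrite le_min; absall => *; apply/andP; split; lra.
Qed.

Lemma key (R : realType) (N : nat) (hk : (1 < k)%N) (hI : Inv P k N.+1) (r : R) (f : pV P -> R) :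
  circular_coloring ge_ gs r f -> r < (2 * k)%:R ->
  let del := (2 * k)%:R / N.+1%:R in del < 1/2 -> k%:R * (1 - 2 * del) <= r / 2.
Proof.
move=> [onc cc] hr del hdel.
have del0 : 0 < del by rewrite divr_gt0 // ltr0n muln_gt0 /= (ltn_trans _ hk).
have hNd : del * N.+1%:R = (2 * k)%:R by rewrite /del divfK // pnatr_eq0.
have fv0 v : 0 <= f v /\ f v < r by have /andP[] := onc v.
pose col v : 'I_N.+1 := inord (Num.truncn (f v / del)).
have colE v : (col v : nat) = Num.truncn (f v / del).
  rewrite inordK // ltnS truncn_le_nat ltr_pdivrMr // mulrC hNd.
  by have [_ h] := fv0 v; apply: lt_trans hr.
have bin v : del * (col v : nat)%:R <= f v /\ f v < del * (col v : nat)%:R + del.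
  have x0 : 0 <= f v / del by apply: divr_ge0; [case: (fv0 v)|apply: ltW].
  have := truncn_itv x0; rewrite -colE => /andP[h1 h2].
  have fx : f v = (f v / del) * del by rewrite divfK // gt_eqF.
  split.
    by rewrite [X in _ <= X]fx [del * _]mulrC ler_pM2r.
  by rewrite [X in X < _]fx -[X in _ < _ + X]mulr1 -mulrDr [del * _]mulrC ltr_pM2r // natr1.
have [kap hkap] := hI col.
pose z (i : 'I_k) := del * (kap i : nat)%:R.
pose w i := if z i < r / 2 then z i else z i - r / 2.
apply: (@pack R k w).
- lra.
- exact: hk.
move=> i j ij.
pose jp : TEk := exist _ (i, j, false) ij.
pose jn : TEk := exist _ (i, j, true) ij.
have [Ep [Ept hEp]] := hkap jp.
have [En [Ent hEn]] := hkap jn.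
have hz (E : pE P) jj p (i' : 'I_k) : tplk jj p = i' ->
   (forall p, (tplk jj p < k)%N -> col (pinc E p) = kap (tplk jj p)) ->
   0 <= z i' <= f (pinc E p) /\ f (pinc E p) < z i' + del.
  move=> hi' hE; have := hE p (ltn_ord _); rewrite hi' => hc.
  have := bin (pinc E p); rewrite hc => -[b1 b2]; split => //.
  by rewrite b1 andbT /z mulr_ge0 // ltW.
have [up1 up2] := hz Ep jp o0 i erefl hEp.
have [vp1 vp2] := hz Ep jp o1 j erefl hEp.
have [un1 un2] := hz En jn o0 i erefl hEn.
have [vn1 vn2] := hz En jn o1 j erefl hEn.
have cp := cc _ _ (ge_E Ep); rewrite gs_E /sg Ept /= in cp.
have cn := cc _ _ (ge_E En); rewrite gs_E /sg Ent /= in cn.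
have [p1 p2] := LP up1 up2 vp1 vp2 cp.
have hn := LN un1 un2 vn1 vn2 (fv0 _).2 (fv0 _).2 cn.
have zi : 0 <= z i < r.
  by move: up1 => /andP[-> h]; apply: le_lt_trans h (fv0 _).2.
have zj : 0 <= z j < r.
  by move: vp1 => /andP[-> h]; apply: le_lt_trans h (fv0 _).2.
exact: (LW zi zj p1 p2 hn).
Qed.

End G.

Unset Implicit Arguments.
Local Open Scope ring_scope.


Theorem theorem2 (R : realType) (k g : nat) (eps : R) :
  (2 <= k)%N -> (3 <= g)%N -> 0 < eps ->
  exists (T : finType) (e sigma : rel T),
    simple_graph e /\ symmetric sigma /\
    girth_ge e g /\ chromatic_number_eq e k /\
    (2 * k)%:R - eps < chi_c R e sigma.
Proof.
move=> hk hg he.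
pose e' := Num.min eps 1.
have e'0 : 0 < e' by rewrite lt_min he ltr01.
have e'e : e' <= eps by rewrite ge_min lexx.
have e'1 : e' <= 1 by rewrite ge_min lexx orbT.
pose K : R := k%:R.
have K2 : 2 <= K by rewrite ler_nat.
pose N := Num.truncn (16 * K ^+ 2 / e').
pose M : R := N.+1%:R.
have hN : 16 * K ^+ 2 / e' < M by apply: truncnS_gt.
have M0 : 0 < M by rewrite ltr0n.
have hN' : 16 * K ^+ 2 < M * e' by rewrite -ltr_pdivrMr.
pose del := (2 * k)%:R / N.+1%:R : R.
have delE : del * M = 2 * K by rewrite /del divfK ?natrM // pnatr_eq0.
have del0 : 0 < del by rewrite divr_gt0 // ltr0n muln_gt0 /= (ltn_trans _ hk).
have hd1 : 4 * K * del <= e' / 2.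
  have : 8 * K ^+ 2 <= e' / 2 * M by nra.
  move=> h; nra.
have hd2 : del < 1 / 2 by nra.
have c0 : (0 < N.+1)%N by [].
have hQ := EH g c0.
have hQ' : forall w, exists Q : hyp w, [/\ hinj Q, chi_gt Q N.+1 & TL (@hA _ Q) (lseq g.+1)./2].
  by move=> w; rewrite /= uphalf_double; apply: hQ.
have [P [hP hI]] := GC (@tplk_inj k) c0 hQ'.
set l := lseq g.+1 in hP.
have hl : (g.+1 <= l)%N by apply: lseq_ge.
have hl2 : (2 <= l)%N.
  apply: leq_trans hl; apply: leq_trans (leqnSn g); exact: leq_trans _ hg.
have keyP (r : R) f : circular_coloring (@ge_ k P) (@gs k P) r f -> 2 * K - e' / 2 <= r.
  move=> cf; case: (ltP r (2 * k)%:R) => hr.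
    have := key hl2 hP hk hI cf hr hd2.
    rewrite -/K -/del => h; nra.
  by move: hr; rewrite natrM -/K => *; lra.
exists (pV P), (@ge_ k P), (@gs k P).
split; first by split; [apply: ge_sym | apply: ge_irr].
split; first by apply: gs_sym.
split.
  move=> s hs; apply: leq_trans (girth_P hl2 hP hs).
  by apply: leq_trans (ltnW hl) _; apply: leqnSn.
split.
  split; first by apply: colorable_k.
  move=> n hn; rewrite leqNgt; apply/negP => nk.
  case: (posnP n) => n0.
    have i0 : (0 < k)%N by apply: ltn_trans hk.
    have i1 : (1 < k)%N by apply: leq_trans hk.
    have ij : Ordinal i0 != Ordinal i1 by [].
    have [kap hkap] := hI (fun _ => Ordinal c0).
    have [E _] := hkap (exist _ (Ordinal i0, Ordinal i1, false) ij).
    case: hn => f _; have := f (pinc E o0); rewrite n0.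
    by case=> m; rewrite ltn0.
  have [f cf] := circ_from_col R n0 hn.
  have := keyP _ _ cf.
  have : (n.+1 <= k)%N := nk.
  rewrite -(ler_nat R) -natr1 -/K natrM => *; lra.
have ne : ([set r : R | 2 <= r /\ exists f, circular_coloring (@ge_ k P) (@gs k P) r f] !=set0)%classic.
  have [f cf] := circ_from_col R (ltnW hk) (@colorable_k k P).
  exists (2 * k)%:R; split; last by exists f.
  by rewrite natrM -/K; lra.
have := @lb_le_inf R _ (2 * K - e' / 2) ne.
have lb : lbound [set r : R | 2 <= r /\ exists f, circular_coloring (@ge_ k P) (@gs k P) r f]%classic (2 * K - e' / 2).
  by move=> r [_ [f cf]]; apply: keyP cf.
move=> /(_ lb) h.
rewrite /chi_c natrM -/K; lra.
Qed.
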